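(* Let $a,b$ be integers with $0<b<a$, let $S=\langle a,a+1,\ldots,a+b\rangle$ with conductor $c$, and let $m\ge 2c-1$. Let $M$ be an ordered $(S,m,r)$-amenable subset of $S$ whose shadow has $t$ elements, and let $N$ be another $(S,m,r)$-amenable subset of $S$ whose shadow is an interval of integers containing $m$. Then the shadow of $N$ has at least $t$ elements.
   Context: For $x\in S$, $\mathrm D(x)=\{\alpha\in S\mid x-\alpha\in S\}$. A set $M=\{m_1<\cdots<m_r\}\subseteq S$ with $2c-1\le m=m_1$ is $(S,m,r)$-amenable if $\mathrm D(m_i)\cap[m,\infty)\subseteq M$ for all $i$. The ground is $\{m,m+1,\ldots,m+a+b-1\}$, and the shadow of $M$ is $M\cap\{m,\ldots,m+a+b-1\}$. For a finite $M\subseteq S\cap[m,\infty)$, let $J$ be the set of $j\in\{0,\ldots,a-1\}$ such that $x-(m+b)=qa+j$ for some $x\in M$ and some integer $q\ge 0$; if $J\neq\emptyset$ let $j_0=\max J$ and let the wagon of $M$ be $W=\{x\in M\mid x-(m+b)=qa+j_0\text{ for some integer }q\}$. An element $P\in M$ is the pivot of $M$ if either $P<m+b$ and $P=\max M$, or $P=\max W$. An $(S,m,r)$-amenable set $M$ with pivot $P$ is ordered amenable if (i) its shadow is $\{m,m+1,\ldots,m+t\}$ for some integer $0\le t<a+b-1$, and (ii) whenever $s\in S\setminus M$ is such that $M\cup\{s\}$ is $(S,m,r+1)$-amenable with the same shadow as $M$, we have $s=P+a$. *)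

(* Defs.v *)
From mathcomp Require Import all_boot.
Set Implicit Arguments.
Unset Strict Implicit.
Unset Printing Implicit Defensive.

Inductive inS (a b : nat) : nat -> Prop :=
| inS0 : inS a b 0
| inS_add x i : i <= b -> inS a b x -> inS a b (x + (a + i)).

Definition is_conductor (a b c : nat) : Prop :=
  (forall y, c <= y -> inS a b y) /\
  (forall n, (forall y, n <= y -> inS a b y) -> c <= n).

Definition inD (a b x alpha : nat) : Prop :=
  [/\ inS a b alpha, alpha <= x & inS a b (x - alpha)].

(* A finite set M = {m_1 < ... < m_r} is represented by its strictly increasing
   enumeration. *)
Definition amenable (a b c m r : nat) (M : seq nat) : Prop :=
  [/\ sorted ltn M, M != [::], size M = r & head 0 M = m] /\
  [/\ (forall x, x \in M -> inS a b x),
      2 * c - 1 <= m &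
      (forall x, x \in M -> forall alpha, inD a b x alpha -> m <= alpha -> alpha \in M)].

Definition shadow (a b m : nat) (M : seq nat) : seq nat :=
  [seq x <- M | m <= x < m + a + b].

Definition Jset (a b m : nat) (M : seq nat) : seq nat :=
  [seq (x - (m + b)) %% a | x <- M & m + b <= x].

(* wagon: x in M with x - (m+b) = q a + j0 for some integer q *)
Definition wagon (a b m : nat) (M : seq nat) : seq nat :=
  let j0 := \max_(j <- Jset a b m M) j in
  [seq x <- M | x %% a == (m + b + j0) %% a].

Definition is_pivot (a b m : nat) (M : seq nat) (P : nat) : Prop :=
  P \in M /\
  ((P < m + b /\ P = \max_(x <- M) x) \/
   (Jset a b m M != [::] /\ P = \max_(x <- wagon a b m M) x)).

Definition ordered_amenable (a b c m r : nat) (M : seq nat) : Prop :=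
  amenable a b c m r M /\
  exists P, [/\ is_pivot a b m M P,
    (exists t, t < a + b - 1 /\ shadow a b m M =i iota m t.+1) &
    (forall s, inS a b s -> s \notin M ->
       amenable a b c m r.+1 (sort leq (s :: M)) ->
       shadow a b m (sort leq (s :: M)) =i shadow a b m M ->
       s = P + a)].

(* Main.v *)
Require Import Defs.
From mathcomp Require Import all_boot zify.

Lemma bigmax_ub (s : seq nat) x : x \in s -> x <= \max_(y <- s) y.
Proof.
elim: s => //= h t IH; rewrite in_cons big_cons => /orP[/eqP->|H].
  exact: leq_maxl.
exact: leq_trans (IH H) (leq_maxr _ _).
Qed.

Lemma bigmax_lt (s : seq nat) a : 0 < a -> (forall x, x \in s -> x < a) -> \max_(y <- s) y < a.
Proof.
move=> Ha; elim: s => [|h t IH] H; first by rewrite big_nil.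
rewrite big_cons gtn_max; apply/andP; split; first by apply: H; exact: mem_head.
by apply: IH => x Hx; apply: H; rewrite in_cons Hx orbT.
Qed.

Lemma bigmax_mem (s : seq nat) : \max_(y <- s) y = 0 \/ \max_(y <- s) y \in s.
Proof.
elim: s => [|h t IH]; first by rewrite big_nil; left.
rewrite big_cons /maxn; case: ltnP => Hh.
  case: IH => [E|E]; last by right; rewrite in_cons E orbT.
  by rewrite E in Hh.
by right; exact: mem_head.
Qed.

Lemma notS1 a b : 1 < a -> ~ inS a b 1.
Proof.
move=> Ha H; move Ed: 1 H => d H; case: H Ed => // x i _ _; lia.
Qed.

Lemma sorted_ge (s : seq nat) x : sorted ltn s -> x \in s -> head 0 s <= x.
Proof.
case: s => [|h t] //= Hs; rewrite in_cons => /orP[/eqP->//|Hx].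
by have /allP/(_ _ Hx) /ltnW := order_path_min ltn_trans Hs.
Qed.

Lemma amen_ge a b c m r M x : amenable a b c m r M -> x \in M -> m <= x.
Proof. by move=> [[Hs _ _ <-] _]; apply: sorted_ge. Qed.

Lemma window a b c m r M x i : amenable a b c m r M -> (forall y, c <= y -> inS a b y) -> c <= m ->
  x \in M -> i <= b -> m + (a + i) <= x -> x - (a + i) \in M.
Proof.
move=> HM HS Hcm Hx Hi Hle; case: HM => _ [_ _ D]; apply: (D x Hx); last by lia.
split; [apply: HS; lia | lia |]. have -> : x - (x - (a + i)) = 0 + (a + i) by lia.
by apply: inS_add => //; constructor.
Qed.

Definition phi a b y := y %% (a + b) + (y %/ (a + b)) * b.

Lemma phi_small a b y : y < a + b -> phi a b y = y.
Proof. by move=> H; rewrite /phi (modn_small H) (divn_small H) mul0n addn0. Qed.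

Lemma phi_sub a b y i : 0 < a -> a + b <= y -> i <= b -> y %% (a+b) + b - i < a + b ->
  (y - (a + i)) %/ (a + b) = (y %/ (a + b)).-1 /\ (y - (a + i)) %% (a + b) = y %% (a + b) + b - i.
Proof.
move=> Ha Hy Hi Hr.
have Hab : 0 < a + b by lia.
have E := divn_eq y (a + b).
have Hq : 0 < y %/ (a + b) by rewrite divn_gt0.
move: Hr E Hq; set r := y %% (a+b); set q := y %/ (a+b).
case: q => [|q] // Hr E _ /=.
have -> : y - (a + i) = q * (a + b) + (r + b - i) by rewrite E; lia.
by rewrite divnMDl // modnMDl divn_small // modn_small // addn0.
Qed.

Lemma phi_sub' a b y i : 0 < a -> a + b <= y -> i <= b -> y %% (a+b) + b - i < a + b ->
  phi a b (y - (a + i)) = y %% (a + b) + b - i + (y %/ (a + b)).-1 * b.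
Proof. by move=> Ha Hy Hi Hr; rewrite /phi; have [-> ->] := @phi_sub a b y i Ha Hy Hi Hr. Qed.

Lemma amen_add a b c m r M s : amenable a b c m r M -> c <= m ->
  (forall y, c <= y -> inS a b y) -> inS a b s -> s \notin M -> m < s ->
  (forall i, i <= b -> m + (a + i) <= s -> s - (a + i) \in M) ->
  amenable a b c m r.+1 (sort leq (s :: M)).
Proof.
move=> HM Hcm HS Hs HsM Hms Hw.
have Hge : forall x, x \in M -> m <= x := fun x Hx => @amen_ge a b c m r M x HM Hx.
case: HM => [[Hsort Hne Hsz Hhd] [HinS H2c HD]].
have HuM : uniq M := sorted_uniq ltn_trans ltnn Hsort.
have HmM : m \in M by rewrite -Hhd; case: (M) Hne => // h t _; exact: mem_head.
split; [split|split].
- rewrite ltn_sorted_uniq_leq sort_uniq /= HsM HuM /=.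
  apply: sort_sorted; exact: leq_total.
- by rewrite -size_eq0 size_sort.
- by rewrite size_sort /= Hsz.
- have Hss : sorted leq (sort leq (s :: M)) by apply: sort_sorted; exact: leq_total.
  have Hm' : m \in sort leq (s :: M) by rewrite mem_sort in_cons HmM orbT.
  move: Hss Hm'; case E: (sort leq (s :: M)) => [|h t] // Hss Hm'.
  have Hh : h \in s :: M by rewrite -(mem_sort leq) E mem_head.
  apply/eqP; rewrite eqn_leq; apply/andP; split.
    move: Hm'; rewrite in_cons => /orP[/eqP->//|Hm'].
    by have /allP/(_ _ Hm') := order_path_min leq_trans Hss.
  by move: Hh; rewrite in_cons => /orP[/eqP->|/Hge]; [exact: ltnW|].
- by move=> x; rewrite mem_sort in_cons => /orP[/eqP->|/HinS].
- exact: H2c.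
- move=> x; rewrite mem_sort in_cons => /orP[/eqP->|Hx] alpha Hal Hma; last first.
    by rewrite mem_sort in_cons (HD x Hx alpha Hal Hma) orbT.
  rewrite mem_sort in_cons; case: Hal => Hal1 Hal2 Hal3.
  move Ed: (s - alpha) Hal3 => d Hd; case: Hd Ed => [|x0 i Hi Hx0] Ed.
    by apply/orP; left; apply/eqP; lia.
  apply/orP; right.
  have Hw' := Hw i Hi ltac:(lia).
  apply: (HD _ Hw' alpha) => //; split => //; first by lia.
  by have -> : s - (a + i) - alpha = x0 by lia.
Qed.

Lemma shadow_add a b m M s : m + a + b <= s ->
  shadow a b m (sort leq (s :: M)) =i shadow a b m M.
Proof.
move=> Hs x; rewrite /shadow !mem_filter mem_sort in_cons.
case: (x =P s) => [->|_] //=.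
have -> : (s < m + a + b) = false by apply/negbTE; rewrite -leqNgt.
by rewrite andbF.
Qed.

Theorem proposition4p17 (a b c m r : nat) (M N : seq nat) (t : nat) :
  0 < b -> b < a -> is_conductor a b c -> 2 * c - 1 <= m ->
  ordered_amenable a b c m r M ->
  size (shadow a b m M) = t ->
  amenable a b c m r N ->
  (exists lo hi, lo <= m <= hi /\
     forall x, (x \in shadow a b m N) = (lo <= x <= hi)) ->
  t <= size (shadow a b m N).
Proof.
move=> Hb Hba Hc Hm [HMa [P [Hpiv [t' [Ht' HshM]] Hii]]] HtM HNa
  [lo [hi [/andP[Hlo Hhi] HshN]]].
have Ha : 1 < a by lia.
have Ha0 : 0 < a by lia.
have HS : forall y, c <= y -> inS a b y by case: Hc.
have Hc1 : 0 < c.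
  case: (posnP c) => // E; exfalso; apply: (@notS1 a b Ha); apply: HS; by rewrite E.
have Hcm : c <= m by lia.
have HgeM : forall x, x \in M -> m <= x := fun x Hx => @amen_ge a b c m r M x HMa Hx.
have HgeN : forall x, x \in N -> m <= x := fun x Hx => @amen_ge a b c m r N x HNa Hx.
have [[HsM HneM HszM HhdM] _] := HMa.
have [[HsN HneN HszN HhdN] _] := HNa.
have HuM : uniq M := sorted_uniq ltn_trans ltnn HsM.
have HuN : uniq N := sorted_uniq ltn_trans ltnn HsN.
have HmN : m \in N by rewrite -HhdN; case: (N) HneN => // h l _; exact: mem_head.
have Ht : t = t'.+1.
  rewrite -HtM -(size_iota m t'.+1); apply: perm_size; apply: uniq_perm => //.
    exact: filter_uniq.
  exact: iota_uniq.
rewrite leqNgt; apply/negP => Hlt.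
have Hhi' : hi < m + t'.
  have : size (iota m (hi.+1 - m)) <= size (shadow a b m N).
    apply: uniq_leq_size; first exact: iota_uniq.
    move=> x; rewrite mem_iota HshN => /andP[H1 H2]; apply/andP; lia.
  rewrite size_iota; lia.
have HN' : forall y, m + y \in N -> phi a b y < t'.
  elim/ltn_ind => y IH Hy.
  case: (ltnP y (a + b)) => Hyab.
    rewrite phi_small //.
    have : m + y \in shadow a b m N.
      rewrite /shadow mem_filter Hy andbT; apply/andP; lia.
    rewrite HshN => /andP[_ ?]; lia.
  have W : forall i, i <= b -> phi a b (y - (a + i)) < t'.
    move=> i Hi; apply: IH; first lia.
    have := @window a b c m r N (m + y) i HNa HS Hcm Hy Hi ltac:(lia).
    by have -> : m + y - (a + i) = m + (y - (a + i)) by lia.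
  have Hq : 0 < y %/ (a + b) by rewrite divn_gt0; lia.
  have Hr : y %% (a + b) < a + b by rewrite ltn_mod; lia.
  have PS : forall i, i <= b -> y %% (a+b) + b - i < a + b ->
     phi a b (y - (a + i)) = y %% (a + b) + b - i + (y %/ (a + b)).-1 * b.
    by move=> i Hi Hri; apply: phi_sub'.
  have PY : phi a b y = y %% (a + b) + (y %/ (a + b)) * b by [].
  move: W PS PY Hq Hr; set q := y %/ (a + b); set rr := y %% (a + b).
  clearbody q rr; case: q => [|q] W PS PY Hq Hr //=.
  case: (leqP (a - 1) rr) => Hra.
    have := W (rr + 1 - a) ltac:(lia); rewrite PS; lia.
  have := W 0 ltac:(lia); rewrite PS ?PY; lia.

have HmtM : m + t' \in M.
  have : m + t' \in shadow a b m M by rewrite HshM mem_iota; apply/andP; lia.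
  by rewrite mem_filter => /andP[_ ->].
have HM' : forall y, phi a b y < t' -> m + y \in M.
  elim/ltn_ind => y IH Hphi.
  case: (ltnP y (a + b)) => Hyab.
    rewrite phi_small // in Hphi.
    have : m + y \in shadow a b m M by rewrite HshM mem_iota; apply/andP; lia.
    by rewrite mem_filter => /andP[_ ->].
  have Hq : 0 < y %/ (a + b) by rewrite divn_gt0; lia.
  have Hr : y %% (a + b) < a + b by rewrite ltn_mod; lia.
  have PS : forall i, i <= b -> y %% (a+b) + b - i < a + b ->
     phi a b (y - (a + i)) = y %% (a + b) + b - i + (y %/ (a + b)).-1 * b.
    by move=> i Hi Hri; apply: phi_sub'.
  have PY : phi a b y = y %% (a + b) + (y %/ (a + b)) * b by [].
  have Hy0 := divn_eq y (a + b).
  move: PS PY Hq Hr Hy0; set q := y %/ (a + b); set rr := y %% (a + b).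
  clearbody q rr; case: q => [|q] PS PY Hq Hr Hy0 //=.
  have Hwin : forall i, i <= b -> m + (y - (a + i)) \in M.
    move=> i Hi; apply: IH; first lia.
    rewrite PS; lia.
  apply/negPn/negP => HyM.
  have Hw2 : forall i, i <= b -> m + (a + i) <= m + y -> m + y - (a + i) \in M.
    move=> i Hi _; have -> : m + y - (a + i) = m + (y - (a + i)) by lia.
    exact: Hwin i Hi.
  have Ham := @amen_add a b c m r M (m + y) HMa Hcm HS (HS (m + y) ltac:(lia)) HyM ltac:(lia) Hw2.
  have Hsh := @shadow_add a b m M (m + y) ltac:(lia).
  have EP := Hii _ (HS (m + y) ltac:(lia)) HyM Ham Hsh.
  have Hbt : b + (rr + q * b) < t'.
    clear -Hphi PY; rewrite PY mulSn in Hphi; lia.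
  have EPq : P = q * a + (m + b + (rr + q * b)).
    clear -EP Hy0; rewrite mulSn mulnDr in Hy0; lia.
  case: Hpiv => HPM [[HPb _]|[HJ HPw]].
    clear -HPb EP Hyab; lia.
  set j0 := \max_(j <- Jset a b m M) j.
  have Hj0a : j0 < a.
    apply: bigmax_lt => // x /mapP [x0 _ ->]; by rewrite ltn_mod.
  have Hjt : t' - b <= j0.
    apply: bigmax_ub; apply/mapP; exists (m + t').
      rewrite mem_filter HmtM andbT leq_add2l; clear -Hbt; lia.
    rewrite modn_small; clear -Hbt Ht'; lia.
  case: (bigmax_mem (wagon a b m M)) => Hw.
    rewrite -HPw in Hw; clear -Hw EPq Hb; lia.
  move: Hw; rewrite -HPw /wagon /= mem_filter => /andP[Hmod _].
  have Hw1 : rr + q * b < a by clear -Hbt Ht'; lia.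
  rewrite EPq modnMDl eqn_modDl !modn_small // in Hmod.
  move/eqP: Hmod; clear -Hjt Hbt; lia.
have HNM : {subset (m + t') :: N <= M}.
  move=> x; rewrite in_cons => /orP[/eqP->//|Hx].
  have -> : x = m + (x - m) by have := HgeN x Hx; lia.
  apply: HM'; apply: HN'; by have -> : m + (x - m) = x by have := HgeN x Hx; lia.
have HtN : m + t' \notin N.
  apply/negP => /HN'; rewrite phi_small; lia.
have := uniq_leq_size (s1 := (m + t') :: N) ltac:(by rewrite /= HtN HuN) HNM.
rewrite /= HszM HszN; lia.
Qed.
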